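(* Let $f\in C^1([0,1])$ satisfy $f(0)=f(1)=0$, $f(u)>0$ for $u\in(0,1)$, $f'(0)>0$, $f(u)\leqslant f'(0)u$ for $u\in(0,1)$. For $a>0$ and $b<0$ let $k(x)=\frac{1}{a-b}$ for $x\in[b,a]$ and $k(x)=0$ otherwise, let $r=\frac{a+b}{a-b}\in(-1,1)$, and let $c_l^*,c_r^*$ be as in the context. If $f'(0)\geqslant1$, then $c_l^*<0<c_r^*$. If $f'(0)<1$, there exists a constant $r^*>0$ (depending only on $f'(0)$) such that: (i) if $r>r^*$, then $0<c_l^*<c_r^*$; (ii) if $r=r^*$, then $0=c_l^*<c_r^*$; (iii) if $-r^*<r<r^*$, then $c_l^*<0<c_r^*$; (iv) if $r=-r^*$, then $c_l^*<c_r^*=0$; (v) if $r<-r^*$, then $c_l^*<c_r^*<0$.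
   Context: $c_l^*=\sup_{\lambda<0}\{\lambda^{-1}[\int_{\mathbb R}k(x)e^{\lambda x}dx-1+f'(0)]\}$ and $c_r^*=\inf_{\lambda>0}\{\lambda^{-1}[\int_{\mathbb R}k(x)e^{\lambda x}dx-1+f'(0)]\}$ are the spreading speeds to the left and right of $u_t=\int_{\mathbb R}k(x-y)u(t,y)dy-u+f(u)$. *)

(* Defs.v *)
From Stdlib Require Import Reals.
From Coquelicot Require Import Coquelicot.
Open Scope R_scope.

Definition C1_on01 (f fp : R -> R) : Prop :=
  forall x, 0 <= x <= 1 ->
    filterlim (fun y => (f y - f x) / (y - x))
      (within (fun y => 0 <= y <= 1 /\ y <> x) (locally x)) (locally (fp x))
    /\ filterlim fp (within (fun y => 0 <= y <= 1) (locally x)) (locally (fp x)).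

Definition int_R (h : R -> R) : R :=
  RInt_gen h (Rbar_locally m_infty) (Rbar_locally p_infty).

(* spreading speeds, d = f'(0) *)
Definition c_left (k : R -> R) (d : R) : Rbar :=
  Lub_Rbar (fun y => exists lam, lam < 0 /\
     y = / lam * (int_R (fun x => k x * exp (lam * x)) - 1 + d)).

Definition c_right (k : R -> R) (d : R) : Rbar :=
  Glb_Rbar (fun y => exists lam, 0 < lam /\
     y = / lam * (int_R (fun x => k x * exp (lam * x)) - 1 + d)).

Definition k_unif (a b : R) (x : R) : R :=
  if Rle_dec b x then (if Rle_dec x a then / (a - b) else 0) else 0.

(* Main.v *)
Require Import Defs.
From Stdlib Require Import Reals Lra Psatz Classical.
From Coquelicot Require Import Coquelicot.
Open Scope R_scope.

Lemma zero_RInt (f : R -> R) (x y : R) :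
  (forall t, Rmin x y < t < Rmax x y -> f t = 0) -> is_RInt f x y 0.
Proof.
  intros H.
  apply is_RInt_ext with (fun _ => 0).
  { intros t Ht; symmetry; apply H; exact Ht. }
  assert (E : scal (y - x) 0 = 0) by (unfold scal; simpl; unfold mult; simpl; ring).
  pose proof (is_RInt_const (V:=R_NormedModule) x y 0) as H0. change (is_RInt (fun _ : R => 0) x y (scal (y - x) 0)) in H0. rewrite E in H0. exact H0.
Qed.

Lemma intk (a b lam : R) : 0 < a -> b < 0 -> lam <> 0 ->
  int_R (fun x => k_unif a b x * exp (lam * x)) =
  (exp (lam * a) - exp (lam * b)) / (lam * (a - b)).
Proof.
  intros Ha Hb Hl.
  set (L := (exp (lam * a) - exp (lam * b)) / (lam * (a - b))).
  unfold int_R.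
  apply is_RInt_gen_unique.
  assert (Hmid : is_RInt (fun x => k_unif a b x * exp (lam * x)) b a L).
  { apply is_RInt_ext with (fun x => / (a - b) * exp (lam * x)).
    { intros t Ht. rewrite Rmin_left in Ht by lra. rewrite Rmax_right in Ht by lra.
      unfold k_unif. destruct (Rle_dec b t); [|lra]. destruct (Rle_dec t a); [|lra]. reflexivity. }
    replace L with (minus ((fun x => / (a - b) * (exp (lam * x) / lam)) a)
                          ((fun x => / (a - b) * (exp (lam * x) / lam)) b)).
    2:{ unfold L, minus, plus, opp; simpl. field. split; lra. }
    apply (is_RInt_derive (fun x => / (a - b) * (exp (lam * x) / lam)) (fun x => / (a - b) * exp (lam * x))).
    - intros x _. auto_derive; [exact I|]. field. split; lra.
    - intros x _. apply (ex_derive_continuous (K:=R_AbsRing) (V:=R_NormedModule)). auto_derive. exact I. }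
  intros P HP.
  unfold filtermapi.
  apply Filter_prod with (fun x => x < b) (fun y => a < y).
  - exists b. intros x Hx; exact Hx.
  - exists a. intros x Hx; exact Hx.
  - intros x y Hx Hy. exists L. split; [|apply locally_singleton; exact HP].
    simpl.
    replace L with (plus (plus 0 L) 0).
    2:{ unfold plus; simpl; ring. }
    apply (@is_RInt_Chasles R_CompleteNormedModule) with a.
    + apply (@is_RInt_Chasles R_CompleteNormedModule) with b; [|exact Hmid].
      apply zero_RInt. intros t Ht. rewrite Rmin_left in Ht by lra. rewrite Rmax_right in Ht by lra.
      unfold k_unif. destruct (Rle_dec b t); [lra|]. ring.
    + apply zero_RInt. intros t Ht. rewrite Rmin_left in Ht by lra. rewrite Rmax_right in Ht by lra.
      unfold k_unif. destruct (Rle_dec b t); [|ring]. destruct (Rle_dec t a); [lra|]. ring.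
Qed.

Lemma sinh_ge (m : R) : 0 <= m -> 2 * m <= exp m - exp (- m).
Proof.
  intros Hm.
  destruct (MVT_gen (fun x => exp x - exp (- x) - 2 * x) 0 m
              (fun x => exp x + exp (- x) - 2)) as [c [Hc E]].
  - intros y _. auto_derive; [exact I|]. ring.
  - intros x _. apply (continuity_pt_filterlim (fun x => exp x - exp (- x) - 2 * x) x).
    apply (ex_derive_continuous (K:=R_AbsRing) (V:=R_NormedModule) (fun x => exp x - exp (- x) - 2 * x)). auto_derive. exact I.
  - rewrite exp_0, Ropp_0, exp_0 in E.
    assert (H2 : 0 <= exp c + exp (- c) - 2).
    { assert (Hp : exp c * exp (- c) = 1) by (rewrite <- exp_plus; replace (c + - c) with 0 by ring; apply exp_0).
      assert (0 < exp c) by apply exp_pos. assert (0 < exp (-c)) by apply exp_pos.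
      assert (exp c * (exp c + exp (- c) - 2) = (exp c - 1) * (exp c - 1)) by (rewrite Rmult_minus_distr_l, Rmult_plus_distr_l, Hp; ring).
      assert (0 <= (exp c - 1) * (exp c - 1)) by (pose proof (Rle_0_sqr (exp c - 1)); unfold Rsqr in *; lra).
      destruct (Rle_lt_dec 0 (exp c + exp (- c) - 2)); [lra|nra]. }
    nra.
Qed.

Lemma exp_quad (x : R) : 0 <= x -> 1 + x + x * x / 4 <= exp x.
Proof.
  intros Hx.
  replace (exp x) with (exp (x / 2) * exp (x / 2)) by (rewrite <- exp_plus; f_equal; field).
  pose proof (exp_ineq1_le (x / 2)). nra.
Qed.

Lemma exp_le_inv (x : R) : x < 1 -> exp x * (1 - x) <= 1.
Proof.
  intros Hx. pose proof (exp_ineq1_le (- x)).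
  assert (Hp : exp x * exp (- x) = 1) by (rewrite <- exp_plus; replace (x + - x) with 0 by ring; apply exp_0).
  pose proof (exp_pos x). nra.
Qed.

Lemma le_div x y z : 0 < z -> y * z <= x -> y <= x / z.
Proof.
  intros Hz H. unfold Rdiv. replace y with ((y * z) * / z) by (field; lra).
  apply Rmult_le_compat_r; [left; apply Rinv_0_lt_compat; lra| lra].
Qed.

Definition P (rho mu : R) := (exp (mu * (rho + 1)) - exp (mu * (rho - 1))) / (2 * mu).
Definition F (d rho mu : R) := (P rho mu - d) / mu.

Lemma P_ge_exp rho mu : 0 < mu -> exp (mu * rho) <= P rho mu.
Proof.
  intros Hm. unfold P.
  replace (exp (mu * (rho + 1))) with (exp (mu * rho) * exp mu) by (rewrite <- exp_plus; f_equal; ring).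
  replace (exp (mu * (rho - 1))) with (exp (mu * rho) * exp (- mu)) by (rewrite <- exp_plus; f_equal; ring).
  pose proof (sinh_ge mu (Rlt_le _ _ Hm)). pose proof (exp_pos (mu * rho)).
  apply le_div; [lra|]. nra.
Qed.

Lemma P_ge_lin rho mu : 0 < mu -> -1 <= rho <= 1 ->
  (1 + rho) / 2 + mu * ((1 + rho) * (1 + rho)) / 8 <= P rho mu.
Proof.
  intros Hm Hr. unfold P.
  pose proof (exp_quad (mu * (rho + 1))) as H1.
  assert (H2 : exp (mu * (rho - 1)) <= 1).
  { rewrite <- exp_0 at 2. destruct (Req_dec (mu * (rho - 1)) 0) as [E|E]; [rewrite E; lra|].
    left. apply exp_increasing. assert (mu * (rho - 1) <= 0) by (apply Rmult_le_0_l; lra). lra. }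
  apply le_div; [lra|].
  assert (0 <= mu * (rho + 1)) by nra.
  specialize (H1 H). nra.
Qed.

Lemma P_shift rho rho' mu : P rho' mu = exp (mu * (rho' - rho)) * P rho mu.
Proof.
  unfold P.
  replace (exp (mu * (rho' + 1))) with (exp (mu * (rho' - rho)) * exp (mu * (rho + 1))) by (rewrite <- exp_plus; f_equal; ring).
  replace (exp (mu * (rho' - 1))) with (exp (mu * (rho' - rho)) * exp (mu * (rho - 1))) by (rewrite <- exp_plus; f_equal; ring).
  unfold Rdiv. ring.
Qed.

Lemma P_pos rho mu : 0 < mu -> 0 < P rho mu.
Proof. intros Hm. pose proof (P_ge_exp rho mu Hm). pose proof (exp_pos (mu * rho)). lra. Qed.

Lemma F_ge_lin d rho mu : 0 < mu -> (1 - d) / mu + rho <= F d rho mu.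
Proof.
  intros Hm. unfold F. pose proof (P_ge_exp rho mu Hm). pose proof (exp_ineq1_le (mu * rho)).
  apply le_div; [lra|]. replace (((1 - d) / mu + rho) * mu) with (1 - d + mu * rho) by (field; lra). lra.
Qed.

Lemma F_big d rho mu : 0 < mu -> -1 < rho <= 1 -> d < 1 ->
  8 / ((1 + rho) * (1 + rho)) <= mu -> 0 <= F d rho mu.
Proof.
  intros Hm Hr Hd HM. unfold F.
  pose proof (P_ge_lin rho mu Hm ltac:(lra)).
  assert (1 <= mu * ((1 + rho) * (1 + rho)) / 8).
  { assert (0 < (1 + rho) * (1 + rho)) by nra.
    apply Rmult_le_compat_r with (r := (1 + rho) * (1 + rho) / 8) in HM; [|lra].
    replace (8 / ((1 + rho) * (1 + rho)) * ((1 + rho) * (1 + rho) / 8)) with 1 in HM by (field; lra).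
    lra. }
  apply le_div; [lra|]. lra.
Qed.

Lemma gap d rho alpha : 0 < d < 1 -> -1 < rho < 1 -> 0 < alpha ->
  (forall nu, 0 < nu -> alpha <= F d (- rho) nu) ->
  exists g, 0 < g /\ forall mu nu, 0 < mu -> 0 < nu -> g <= F d rho mu + F d (- rho) nu.
Proof.
  intros Hd Hr Ha Hnu.
  set (M := 8 / ((1 + rho) * (1 + rho))).
  assert (HM : 0 < M) by (unfold M; apply Rdiv_lt_0_compat; nra).
  exists (Rmin alpha ((1 - d) / M)). split.
  { apply Rmin_pos; [lra|]. apply Rdiv_lt_0_compat; lra. }
  intros mu nu Hm Hn.
  destruct (Rle_lt_dec M mu) as [HmM|HmM].
  - pose proof (F_big d rho mu Hm ltac:(lra) ltac:(lra) HmM). specialize (Hnu nu Hn).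
    pose proof (Rmin_l alpha ((1 - d) / M)). lra.
  - pose proof (F_ge_lin d rho mu Hm). pose proof (F_ge_lin d (- rho) nu Hn).
    assert (0 <= (1 - d) / nu) by (apply Rdiv_le_0_compat; lra).
    assert ((1 - d) / M <= (1 - d) / mu).
    { unfold Rdiv. apply Rmult_le_compat_l; [lra|]. apply Rinv_le_contravar; lra. }
    pose proof (Rmin_r alpha ((1 - d) / M)). lra.
Qed.
Lemma div_lt x y z : 0 < z -> x < y * z -> x / z < y.
Proof.
  intros Hz H. unfold Rdiv. replace y with ((y * z) * / z) by (field; lra).
  apply Rmult_lt_compat_r; [apply Rinv_0_lt_compat; lra| lra].
Qed.

Lemma div_le_inv x y z : 0 < z -> y <= x / z -> y * z <= x.
Proof.
  intros Hz H. replace x with ((x / z) * z) by (field; lra).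
  apply Rmult_le_compat_r; lra.
Qed.

Definition T (d rho : R) := exists mu, 0 < mu /\ P rho mu < d.

Lemma T_down d rho rho' : T d rho -> rho' <= rho -> T d rho'.
Proof.
  intros [mu [Hm HP]] Hr. exists mu. split; [exact Hm|].
  rewrite (P_shift rho rho' mu).
  pose proof (P_pos rho mu Hm).
  assert (exp (mu * (rho' - rho)) <= 1).
  { rewrite <- exp_0. destruct (Req_dec (mu * (rho' - rho)) 0) as [E|E]; [rewrite E; lra|].
    left. apply exp_increasing. assert (mu * (rho' - rho) <= 0) by (apply Rmult_le_0_l; lra). lra. }
  pose proof (exp_pos (mu * (rho' - rho))). nra.
Qed.

Lemma T_low d : 0 < d < 1 -> T d (-1 + d / 2).
Proof.
  intros Hd. exists (2 / d). split; [apply Rdiv_lt_0_compat; lra|].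
  unfold P. replace (2 / d * (-1 + d / 2 + 1)) with 1 by (field; lra).
  pose proof exp_le_3. pose proof (exp_pos (2 / d * (-1 + d / 2 - 1))).
  apply div_lt. { assert (0 < 2 / d) by (apply Rdiv_lt_0_compat; lra). lra. }
  replace (d * (2 * (2 / d))) with 4 by (field; lra). lra.
Qed.

Lemma T_up d rho : 0 < d < 1 -> T d rho -> rho <= - ((1 - d) / 32).
Proof.
  intros Hd [mu [Hm HP]].
  destruct (Rle_lt_dec rho (- ((1 - d) / 32))) as [H|H]; [exact H|]. exfalso.
  pose proof (P_ge_exp rho mu Hm). pose proof (exp_ineq1_le (mu * rho)).
  destruct (Rle_lt_dec 0 rho) as [Hr0|Hr0].
  - assert (0 <= mu * rho) by (apply Rmult_le_pos; lra). lra.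
  - destruct (Rle_lt_dec mu 32) as [Hm1|Hm1].
    + assert (mu * rho > mu * (- ((1 - d) / 32))) by (apply Rmult_lt_compat_l; lra).
      assert (mu * ((1 - d) / 32) <= 32 * ((1 - d) / 32)) by (apply Rmult_le_compat_r; lra).
      lra.
    + pose proof (P_ge_lin rho mu Hm ltac:(lra)).
      assert (Hc : (31/32) * (31/32) <= (1 + rho) * (1 + rho)) by (apply Rmult_le_compat; lra).
      assert (32 * ((31/32) * (31/32)) <= mu * ((1 + rho) * (1 + rho))) by (apply Rmult_le_compat; lra).
      lra.
Qed.

Lemma thresh d : 0 < d < 1 -> exists sigma, -1 < sigma < 0 /\
  (forall mu, 0 < mu -> 0 <= F d sigma mu) /\
  (forall eps, 0 < eps -> exists mu, 0 < mu /\ F d sigma mu < eps) /\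
  (forall rho, rho < sigma -> exists mu, 0 < mu /\ F d rho mu < 0) /\
  (forall rho mu, sigma < rho -> 0 < mu -> (rho - sigma) * d <= F d rho mu).
Proof.
  intros Hd.
  assert (Hb : bound (T d)).
  { exists (- ((1 - d) / 32)). intros x Hx. apply T_up; assumption. }
  destruct (completeness (T d) Hb (ex_intro _ _ (T_low d Hd))) as [sigma [Hub Hleast]].
  assert (Hs1 : -1 + d / 2 <= sigma) by (apply Hub, T_low, Hd).
  assert (Hs2 : sigma <= - ((1 - d) / 32)).
  { apply Hleast. intros x Hx. apply T_up; assumption. }
  assert (HnT : forall mu, 0 < mu -> d <= P sigma mu).
  { intros mu Hm. destruct (Rle_lt_dec d (P sigma mu)) as [H|H]; [exact H|]. exfalso.
    set (q := P sigma mu) in *.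
    assert (Hq : 0 < q) by (apply P_pos; exact Hm).
    set (eta := (1 - q / d) / (2 * mu)).
    assert (Hqd : q / d < 1) by (apply div_lt; lra).
    assert (Hqd0 : 0 < q / d) by (apply Rdiv_lt_0_compat; lra).
    assert (Heta : 0 < eta) by (apply Rdiv_lt_0_compat; lra).
    assert (HT : T d (sigma + eta)).
    { exists mu. split; [exact Hm|]. rewrite (P_shift sigma (sigma + eta) mu). fold q.
      replace (mu * (sigma + eta - sigma)) with ((1 - q / d) / 2) by (unfold eta; field; lra).
      pose proof (exp_le_inv ((1 - q / d) / 2) ltac:(lra)).
      pose proof (exp_pos ((1 - q / d) / 2)).
      assert (q = (q / d) * d) by (field; lra).
      set (e := exp ((1 - q / d) / 2)) in *. set (t := q / d) in *.
      assert (e * q * (1 - (1 - t) / 2) <= q) by nra.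
      assert (q < d * (1 - (1 - t) / 2)) by nra.
      nra. }
    pose proof (Hub _ HT). lra. }
  assert (HT : forall rho, rho < sigma -> T d rho).
  { intros rho Hr. destruct (classic (exists rho', T d rho' /\ rho < rho')) as [[rho' [H1 H2]]|Hn].
    - apply T_down with rho'; [exact H1|lra].
    - exfalso. assert (sigma <= rho); [|lra]. apply Hleast. intros x Hx.
      destruct (Rle_lt_dec x rho) as [H|H]; [exact H|]. exfalso. apply Hn. exists x. auto. }
  exists sigma. split; [lra|]. split; [|split; [|split]].
  - intros mu Hm. unfold F. apply Rdiv_le_0_compat; [|lra]. pose proof (HnT mu Hm). lra.
  - intros eps He. destruct (classic (exists mu, 0 < mu /\ F d sigma mu < eps)) as [H|Hn]; [exact H|].
    exfalso.
    assert (Hge : forall mu, 0 < mu -> d + eps * mu <= P sigma mu).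
    { intros mu Hm. destruct (Rle_lt_dec eps (F d sigma mu)) as [H|H].
      - unfold F in H. apply div_le_inv in H; lra.
      - exfalso. apply Hn. exists mu. auto. }
    set (K := 128 / (d * d)).
    assert (HK : 0 < K) by (unfold K; apply Rdiv_lt_0_compat; nra).
    assert (HKd : K * (d * d) = 128) by (unfold K; field; lra).
    set (eta := Rmin (d / 4) (Rmin (eps / (d + K * eps)) (1 / K))).
    assert (He1 : eta <= d / 4) by apply Rmin_l.
    assert (He2 : eta <= eps / (d + K * eps)) by (eapply Rle_trans; [apply Rmin_r|apply Rmin_l]).
    assert (He3 : eta <= 1 / K) by (eapply Rle_trans; [apply Rmin_r|apply Rmin_r]).
    assert (He0 : 0 < eta).
    { apply Rmin_pos; [lra|]. apply Rmin_pos; apply Rdiv_lt_0_compat; nra. }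
    assert (He2' : eta * (d + K * eps) <= eps).
    { apply div_le_inv in He2; [lra|nra]. }
    assert (He3' : eta * K <= 1) by (apply div_le_inv in He3; lra).
    destruct (HT (sigma - eta) ltac:(lra)) as [mu [Hm HP]].
    destruct (Rle_lt_dec K mu) as [HmK|HmK].
    + pose proof (P_ge_lin (sigma - eta) mu Hm ltac:(lra)).
      assert (Hc : (d / 4) * (d / 4) <= (1 + (sigma - eta)) * (1 + (sigma - eta))) by (apply Rmult_le_compat; lra).
      assert (K * ((d / 4) * (d / 4)) <= mu * ((1 + (sigma - eta)) * (1 + (sigma - eta)))) by (apply Rmult_le_compat; nra).
      lra.
    + rewrite (P_shift sigma (sigma - eta) mu) in HP.
      replace (mu * (sigma - eta - sigma)) with (- (mu * eta)) in HP by ring.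
      pose proof (exp_ineq1_le (- (mu * eta))).
      pose proof (Hge mu Hm).
      assert (Hme : mu * eta <= 1).
      { assert (mu * eta <= K * eta) by (apply Rmult_le_compat_r; lra). lra. }
      assert (Hmm : mu * eta * (d + mu * eps) <= eps * mu).
      { assert (eta * (d + mu * eps) <= eta * (d + K * eps)).
        { apply Rmult_le_compat_l; [lra|]. assert (mu * eps <= K * eps) by (apply Rmult_le_compat_r; lra). lra. }
        assert (eta * (d + mu * eps) <= eps) by lra.
        replace (mu * eta * (d + mu * eps)) with (mu * (eta * (d + mu * eps))) by ring.
        rewrite (Rmult_comm eps mu). apply Rmult_le_compat_l; lra. }
      assert (0 < eps * mu) by (apply Rmult_lt_0_compat; lra).
      set (E := exp (- (mu * eta))) in *. set (Q := P sigma mu) in *.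
      assert (E * Q >= (1 - mu * eta) * Q) by (apply Rle_ge, Rmult_le_compat_r; lra).
      assert ((1 - mu * eta) * Q >= (1 - mu * eta) * (d + eps * mu)) by (apply Rle_ge, Rmult_le_compat_l; lra).
      nra.
  - intros rho Hr. destruct (HT rho Hr) as [mu [Hm HP]]. exists mu. split; [exact Hm|].
    unfold F. apply div_lt; lra.
  - intros rho mu Hr Hm. unfold F. apply le_div; [exact Hm|].
    rewrite (P_shift sigma rho mu).
    pose proof (exp_ineq1_le (mu * (rho - sigma))). pose proof (HnT mu Hm).
    assert (exp (mu * (rho - sigma)) * P sigma mu >= (1 + mu * (rho - sigma)) * P sigma mu)
      by (apply Rle_ge, Rmult_le_compat_r; lra).
    assert ((1 + mu * (rho - sigma)) * P sigma mu >= (1 + mu * (rho - sigma)) * d).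
    { apply Rle_ge, Rmult_le_compat_l; [|lra]. assert (0 < mu * (rho - sigma)) by (apply Rmult_lt_0_compat; lra). lra. }
    nra.
Qed.
Lemma glb_ge (E : R -> Prop) (al : R) : (forall y, E y -> al <= y) -> Rbar_le al (Glb_Rbar E).
Proof. intros H. destruct (Glb_Rbar_correct E) as [_ H2]. apply H2. intros y Hy. simpl. apply H, Hy. Qed.

Lemma glb_le (E : R -> Prop) (y : R) : E y -> Rbar_le (Glb_Rbar E) y.
Proof. intros H. destruct (Glb_Rbar_correct E) as [H1 _]. apply H1, H. Qed.

Lemma lub_le (E : R -> Prop) (al : R) : (forall y, E y -> y <= al) -> Rbar_le (Lub_Rbar E) al.
Proof. intros H. destruct (Lub_Rbar_correct E) as [_ H2]. apply H2. intros y Hy. simpl. apply H, Hy. Qed.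

Lemma lub_ge (E : R -> Prop) (y : R) : E y -> Rbar_le y (Lub_Rbar E).
Proof. intros H. destruct (Lub_Rbar_correct E) as [H1 _]. apply H1, H. Qed.

Lemma rbar_zero (c : Rbar) : (forall eps, 0 < eps -> Rbar_le (- eps) c) ->
  (forall eps, 0 < eps -> Rbar_le c eps) -> c = Finite 0.
Proof.
  intros H1 H2. destruct c as [x| |].
  - f_equal. destruct (Rtotal_order x 0) as [H|[H|H]]; [|exact H|].
    + specialize (H1 (- x / 2) ltac:(lra)). simpl in H1. lra.
    + specialize (H2 (x / 2) ltac:(lra)). simpl in H2. lra.
  - specialize (H2 1 ltac:(lra)). simpl in H2. contradiction.
  - specialize (H1 1 ltac:(lra)). simpl in H1. contradiction.
Qed.

Lemma gap_rbar (El Er : R -> Prop) (g y0 x0 : R) : El y0 -> Er x0 -> 0 < g ->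
  (forall y x, El y -> Er x -> y + g <= x) -> Rbar_lt (Lub_Rbar El) (Glb_Rbar Er).
Proof.
  intros Hy0 Hx0 Hg H.
  assert (A1 : Rbar_le y0 (Lub_Rbar El)) by (apply lub_ge, Hy0).
  assert (A2 : Rbar_le (Lub_Rbar El) (x0 - g)).
  { apply lub_le. intros y Hy. specialize (H y x0 Hy Hx0). lra. }
  destruct (Lub_Rbar El) as [L| |] eqn:EL; simpl in A1, A2; try contradiction.
  apply Rbar_lt_le_trans with (L + g); [simpl; lra|].
  apply glb_ge. intros x Hx.
  assert (A3 : Rbar_le (Lub_Rbar El) (x - g)).
  { apply lub_le. intros y Hy. specialize (H y x Hy Hx). lra. }
  rewrite EL in A3. simpl in A3. lra.
Qed.

Lemma cr_eq a b dd : 0 < a -> b < 0 ->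
  c_right (k_unif a b) dd =
  Glb_Rbar (fun y => exists mu, 0 < mu /\ y = (a - b) / 2 * F (1 - dd) ((a + b) / (a - b)) mu).
Proof.
  intros Ha Hb. unfold c_right. apply Glb_Rbar_eqset. intros y. split.
  - intros [lam [Hl Hy]]. exists (lam * (a - b) / 2). split.
    { apply Rdiv_lt_0_compat; [apply Rmult_lt_0_compat|]; lra. }
    rewrite Hy, intk by lra. unfold F, P.
    replace (lam * (a - b) / 2 * ((a + b) / (a - b) + 1)) with (lam * a) by (field; lra).
    replace (lam * (a - b) / 2 * ((a + b) / (a - b) - 1)) with (lam * b) by (field; lra).
    field. lra.
  - intros [mu [Hm Hy]]. exists (mu * 2 / (a - b)). split.
    { apply Rdiv_lt_0_compat; lra. }
    rewrite Hy, intk. 2,3: lra. 2:{ assert (0 < mu * 2 / (a - b)) by (apply Rdiv_lt_0_compat; lra). lra. }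
    unfold F, P.
    replace (mu * ((a + b) / (a - b) + 1)) with (mu * 2 / (a - b) * a) by (field; lra).
    replace (mu * ((a + b) / (a - b) - 1)) with (mu * 2 / (a - b) * b) by (field; lra).
    field. lra.
Qed.

Lemma cl_eq a b dd : 0 < a -> b < 0 ->
  c_left (k_unif a b) dd =
  Lub_Rbar (fun y => exists nu, 0 < nu /\ y = - ((a - b) / 2 * F (1 - dd) (- ((a + b) / (a - b))) nu)).
Proof.
  intros Ha Hb. unfold c_left. apply Lub_Rbar_eqset. intros y. split.
  - intros [lam [Hl Hy]]. exists (- lam * (a - b) / 2). split.
    { apply Rdiv_lt_0_compat; [apply Rmult_lt_0_compat|]; lra. }
    rewrite Hy, intk by lra. unfold F, P.
    replace (- lam * (a - b) / 2 * (- ((a + b) / (a - b)) + 1)) with (lam * b) by (field; lra).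
    replace (- lam * (a - b) / 2 * (- ((a + b) / (a - b)) - 1)) with (lam * a) by (field; lra).
    field. lra.
  - intros [nu [Hm Hy]]. exists (- (nu * 2 / (a - b))). split.
    { assert (0 < nu * 2 / (a - b)) by (apply Rdiv_lt_0_compat; lra). lra. }
    rewrite Hy, intk. 2,3: lra. 2:{ assert (0 < nu * 2 / (a - b)) by (apply Rdiv_lt_0_compat; lra). lra. }
    unfold F, P.
    replace (nu * (- ((a + b) / (a - b)) + 1)) with (- (nu * 2 / (a - b)) * b) by (field; lra).
    replace (nu * (- ((a + b) / (a - b)) - 1)) with (- (nu * 2 / (a - b)) * a) by (field; lra).
    field. lra.
Qed.
Lemma F_part1 d rho mu : d <= 0 -> -1 <= rho <= 1 -> 0 < mu ->
  (1 + rho) * (1 + rho) / 8 <= F d rho mu.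
Proof.
  intros Hd Hr Hm. unfold F. pose proof (P_ge_lin rho mu Hm Hr).
  apply le_div; [exact Hm|].
  replace ((1 + rho) * (1 + rho) / 8 * mu) with (mu * ((1 + rho) * (1 + rho)) / 8) by field.
  lra.
Qed.

Lemma r_range a b : 0 < a -> b < 0 -> -1 < (a + b) / (a - b) < 1.
Proof.
  intros Ha Hb.
  assert (H1 : (a + b) / (a - b) + 1 = 2 * a / (a - b)) by (field; lra).
  assert (H2 : 1 - (a + b) / (a - b) = - 2 * b / (a - b)) by (field; lra).
  assert (0 < 2 * a / (a - b)) by (apply Rdiv_lt_0_compat; lra).
  assert (0 < - 2 * b / (a - b)) by (apply Rdiv_lt_0_compat; lra).
  lra.
Qed.

Theorem corollary5p4 :
  (forall (f fp : R -> R) (a b : R),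
      C1_on01 f fp -> f 0 = 0 -> f 1 = 0 ->
      (forall u, 0 < u < 1 -> 0 < f u) -> 0 < fp 0 ->
      (forall u, 0 < u < 1 -> f u <= fp 0 * u) ->
      0 < a -> b < 0 -> 1 <= fp 0 ->
      Rbar_lt (c_left (k_unif a b) (fp 0)) (Finite 0) /\
      Rbar_lt (Finite 0) (c_right (k_unif a b) (fp 0)))
  /\
  (forall d : R, 0 < d < 1 ->
    exists rstar : R, 0 < rstar /\
    forall (f fp : R -> R) (a b : R),
      C1_on01 f fp -> f 0 = 0 -> f 1 = 0 ->
      (forall u, 0 < u < 1 -> 0 < f u) -> 0 < fp 0 ->
      (forall u, 0 < u < 1 -> f u <= fp 0 * u) ->
      0 < a -> b < 0 -> fp 0 = d ->
      let r := (a + b) / (a - b) in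
      let cl := c_left (k_unif a b) (fp 0) in
      let cr := c_right (k_unif a b) (fp 0) in
      (rstar < r -> Rbar_lt (Finite 0) cl /\ Rbar_lt cl cr) /\
      (r = rstar -> cl = Finite 0 /\ Rbar_lt cl cr) /\
      (- rstar < r < rstar -> Rbar_lt cl (Finite 0) /\ Rbar_lt (Finite 0) cr) /\
      (r = - rstar -> Rbar_lt cl cr /\ cr = Finite 0) /\
      (r < - rstar -> Rbar_lt cl cr /\ Rbar_lt cr (Finite 0))).
Proof.
  split.
  - intros f fp a b _ _ _ _ _ _ Ha Hb Hd.
    rewrite cl_eq, cr_eq by lra.
    pose proof (r_range a b Ha Hb) as Hr.
    set (r := (a + b) / (a - b)) in *.
    set (s := (a - b) / 2).
    assert (Hs : 0 < s) by (unfold s; lra).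
    split.
    + apply Rbar_le_lt_trans with (- (s * ((1 + - r) * (1 + - r) / 8))).
      * apply lub_le. intros y [nu [Hn ->]].
        pose proof (F_part1 (1 - fp 0) (- r) nu ltac:(lra) ltac:(lra) Hn).
        assert (s * ((1 + - r) * (1 + - r) / 8) <= s * F (1 - fp 0) (- r) nu) by (apply Rmult_le_compat_l; lra).
        lra.
      * simpl. assert (0 < (1 + - r) * (1 + - r)) by (apply Rmult_lt_0_compat; lra).
        assert (0 < s * ((1 + - r) * (1 + - r) / 8)) by (apply Rmult_lt_0_compat; lra). lra.
    + apply Rbar_lt_le_trans with (s * ((1 + r) * (1 + r) / 8)).
      * simpl. assert (0 < (1 + r) * (1 + r)) by (apply Rmult_lt_0_compat; lra).
        apply Rmult_lt_0_compat; lra.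
      * apply glb_ge. intros y [mu [Hm ->]].
        pose proof (F_part1 (1 - fp 0) r mu ltac:(lra) ltac:(lra) Hm).
        apply Rmult_le_compat_l; lra.
  - intros d Hd.
    destruct (thresh (1 - d) ltac:(lra)) as [sg [Hsg [HF0 [Heps [HTl HTg]]]]].
    exists (- sg). split; [lra|].
    intros f fp a b _ _ _ _ _ _ Ha Hb Hfd r cl cr.
    unfold cl, cr. rewrite cl_eq, cr_eq by lra. fold r. rewrite Hfd.
    pose proof (r_range a b Ha Hb) as Hr. fold r in Hr.
    set (s := (a - b) / 2).
    assert (Hs : 0 < s) by (unfold s; lra).
    set (El := fun y => exists nu, 0 < nu /\ y = - (s * F (1 - d) (- r) nu)).
    set (Er := fun y => exists mu, 0 < mu /\ y = s * F (1 - d) r mu).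
    assert (El0 : El (- (s * F (1 - d) (- r) 1))) by (exists 1; split; [lra|reflexivity]).
    assert (Er0 : Er (s * F (1 - d) r 1)) by (exists 1; split; [lra|reflexivity]).
    assert (Clpos : (exists nu, 0 < nu /\ F (1 - d) (- r) nu < 0) -> Rbar_lt 0 (Lub_Rbar El)).
    { intros [nu [Hn HF]]. apply Rbar_lt_le_trans with (- (s * F (1 - d) (- r) nu)).
      - simpl. assert (s * F (1 - d) (- r) nu < 0) by (apply Rmult_pos_neg; lra). lra.
      - apply lub_ge. exists nu. split; [lra|reflexivity]. }
    assert (Crneg : (exists mu, 0 < mu /\ F (1 - d) r mu < 0) -> Rbar_lt (Glb_Rbar Er) 0).
    { intros [mu [Hm HF]]. apply Rbar_le_lt_trans with (s * F (1 - d) r mu).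
      - apply glb_le. exists mu. split; [lra|reflexivity].
      - simpl. apply Rmult_pos_neg; lra. }
    assert (Crpos : sg < r -> Rbar_lt 0 (Glb_Rbar Er)).
    { intros H. apply Rbar_lt_le_trans with (s * ((r - sg) * (1 - d))).
      - simpl. apply Rmult_lt_0_compat; [lra|]. apply Rmult_lt_0_compat; lra.
      - apply glb_ge. intros y [mu [Hm ->]]. apply Rmult_le_compat_l; [lra|]. apply HTg; lra. }
    assert (Clneg : sg < - r -> Rbar_lt (Lub_Rbar El) 0).
    { intros H. apply Rbar_le_lt_trans with (- (s * ((- r - sg) * (1 - d)))).
      - apply lub_le. intros y [nu [Hn ->]].
        assert (s * ((- r - sg) * (1 - d)) <= s * F (1 - d) (- r) nu)
          by (apply Rmult_le_compat_l; [lra|]; apply HTg; lra). lra.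
      - simpl. assert (0 < s * ((- r - sg) * (1 - d))); [|lra].
        apply Rmult_lt_0_compat; [lra|]. apply Rmult_lt_0_compat; lra. }
    assert (Clzero : - r = sg -> Lub_Rbar El = Finite 0).
    { intros H. apply rbar_zero.
      - intros eps He. destruct (Heps (eps / s) ltac:(apply Rdiv_lt_0_compat; lra)) as [nu [Hn HF]].
        apply Rbar_le_trans with (- (s * F (1 - d) (- r) nu)).
        + simpl. rewrite H. assert (s * F (1 - d) sg nu < s * (eps / s)) by (apply Rmult_lt_compat_l; lra).
          replace (s * (eps / s)) with eps in * by (field; lra). lra.
        + apply lub_ge. exists nu. split; [lra|reflexivity].
      - intros eps He. apply lub_le. intros y [nu [Hn ->]]. rewrite H.
        pose proof (HF0 nu Hn). assert (0 <= s * F (1 - d) sg nu) by (apply Rmult_le_pos; lra). lra. }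
    assert (Crzero : r = sg -> Glb_Rbar Er = Finite 0).
    { intros H. apply rbar_zero.
      - intros eps He. apply glb_ge. intros y [mu [Hm ->]]. rewrite H.
        pose proof (HF0 mu Hm). assert (0 <= s * F (1 - d) sg mu) by (apply Rmult_le_pos; lra). lra.
      - intros eps He. destruct (Heps (eps / s) ltac:(apply Rdiv_lt_0_compat; lra)) as [mu [Hm HF]].
        apply Rbar_le_trans with (s * F (1 - d) r mu).
        + apply glb_le. exists mu. split; [lra|reflexivity].
        + simpl. rewrite H. assert (s * F (1 - d) sg mu < s * (eps / s)) by (apply Rmult_lt_compat_l; lra).
          replace (s * (eps / s)) with eps in * by (field; lra). lra. }
    assert (Gap : forall rho, (rho = r \/ rho = - r) -> sg < - rho ->
               Rbar_lt (Lub_Rbar El) (Glb_Rbar Er)).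
    { intros rho Hrho Hlt.
      destruct (gap (1 - d) rho ((- rho - sg) * (1 - d)) ltac:(lra) ltac:(destruct Hrho; subst; lra)
                  ltac:(apply Rmult_lt_0_compat; lra)) as [g [Hg HG]].
      { intros nu Hn. apply HTg; lra. }
      apply gap_rbar with (s * g) (- (s * F (1 - d) (- r) 1)) (s * F (1 - d) r 1); try assumption.
      { apply Rmult_lt_0_compat; lra. }
      intros y x [nu [Hn ->]] [mu [Hm ->]].
      destruct Hrho as [-> | ->].
      - specialize (HG mu nu Hm Hn).
        assert (s * g <= s * (F (1 - d) r mu + F (1 - d) (- r) nu)) by (apply Rmult_le_compat_l; lra). lra.
      - specialize (HG nu mu Hn Hm). rewrite Ropp_involutive in HG.
        assert (s * g <= s * (F (1 - d) (- r) nu + F (1 - d) r mu)) by (apply Rmult_le_compat_l; lra). lra. }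
    split; [|split; [|split; [|split]]].
    + intros H. split.
      * apply Clpos. apply HTl. lra.
      * apply (Gap (- r)); [right; reflexivity| lra].
    + intros H. rewrite Clzero by lra. split; [reflexivity|]. apply Crpos. lra.
    + intros H. split; [apply Clneg; lra | apply Crpos; lra].
    + intros H. rewrite Crzero by lra. split; [|reflexivity]. apply Clneg. lra.
    + intros H. split.
      * apply (Gap r); [left; reflexivity| lra].
      * apply Crneg. apply HTl. lra.
Qed.
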